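(* Consider a uniform planar array with $M_x$ antennas along the $x$-axis (spacing $d_x$) and $M_y$ along the $y$-axis (spacing $d_y$), wavelength $\lambda$, and for $\boldsymbol\theta=(\theta_x,\theta_y)$ let $\mathbf{a}(\boldsymbol\theta)\in\mathbb{C}^{M_xM_y}$ have entries $e^{j\frac{2\pi}{\lambda}(d_x m_x\sin\theta_x+d_y m_y\sin\theta_y)}$, $0\le m_x\le M_x-1$, $0\le m_y\le M_y-1$. Let $\boldsymbol\theta_1=(\theta_{x,1},\theta_{y,1})$ and $\boldsymbol\theta_2=(\theta_{x,2},\theta_{y,2})$ be random with $\sin\theta_{x,1}-\sin\theta_{x,2}\sim U[-\alpha_x,\alpha_x]$ and $\sin\theta_{y,1}-\sin\theta_{y,2}\sim U[-\alpha_y,\alpha_y]$ independent of $\sin\theta_{x,1}-\sin\theta_{x,2}$, where $\alpha_x,\alpha_y\in[0,1]$. Then $$\mathbb{E}\left[\mathbf{a}^H(\boldsymbol\theta_1)\mathbf{a}(\boldsymbol\theta_2)\right]=\mu\!\left(\frac{\alpha_xd_x}{\lambda},M_x\right)\mu\!\left(\frac{\alpha_yd_y}{\lambda},M_y\right),$$ $$\operatorname{Var}\left[\mathbf{a}^H(\boldsymbol\theta_1)\mathbf{a}(\boldsymbol\theta_2)\right]=\eta\!\left(\frac{\alpha_xd_x}{\lambda},M_x\right)\eta\!\left(\frac{\alpha_yd_y}{\lambda},M_y\right)-\left[\mu\!\left(\frac{\alpha_xd_x}{\lambda},M_x\right)\mu\!\left(\frac{\alpha_yd_y}{\lambda},M_y\right)\right]^2,$$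 where $\mu(c,N)=\sum_{m=0}^{N-1}\operatorname{sinc}(2\pi mc)$ and $\eta(c,N)=\sum_{m_1=0}^{N-1}\sum_{m_2=0}^{N-1}\operatorname{sinc}(2\pi c(m_1-m_2))$.
   Context: $\operatorname{sinc}(x)=\sin(x)/x$ for $x\neq0$, $\operatorname{sinc}(0)=1$. For a complex random variable $Z$, $\operatorname{Var}[Z]=\mathbb{E}|Z|^2-|\mathbb{E}Z|^2$. A uniform distribution on $[-0,0]$ means the difference is $0$ almost surely. *)

(* Defs.v *)
From HB Require Import structures.
From mathcomp Require Import all_boot all_order all_algebra.
From mathcomp Require Import all_classical all_reals all_analysis.
From mathcomp Require Import complex.
Set Implicit Arguments. Unset Strict Implicit. Unset Printing Implicit Defensive.
Import Order.TTheory GRing.Theory Num.Theory.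
Local Open Scope ring_scope.
Local Open Scope complex_scope.
Local Open Scope classical_set_scope.

Section Defs.
Variable R : realType.

Definition sinc (x : R) : R := if x == 0 then 1 else sin x / x.

Definition upa_mu (c : R) (N : nat) : R :=
  \sum_(m < N) sinc (2 * pi * m%:R * c).

Definition upa_eta (c : R) (N : nat) : R :=
  \sum_(m1 < N) \sum_(m2 < N) sinc (2 * pi * c * (m1%:R - m2%:R)).

Definition expj (x : R) : R[i] := (cos x) +i* (sin x).

Definition steer (Mx My : nat) (dx dy lam : R) (th : R * R)
  : {ffun 'I_Mx * 'I_My -> R[i]} :=
  [ffun m : 'I_Mx * 'I_My => expj (2 * pi / lam *
       (dx * (m.1 : nat)%:R * sin th.1 + dy * (m.2 : nat)%:R * sin th.2))].

Definition herm_inner (Mx My : nat) (u v : {ffun 'I_Mx * 'I_My -> R[i]}) : R[i] :=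
  \sum_(m : 'I_Mx * 'I_My) conjc (u m) * v m.

Context d (T : measurableType d) (P : probability T R).

Definition cexpect (Z : T -> R[i]) : R[i] :=
  (fine 'E_P[fun w => complex.Re (Z w)]) +i* (fine 'E_P[fun w => complex.Im (Z w)]).

Definition cvariance (Z : T -> R[i]) : R :=
  fine 'E_P[fun w => complex.Re (Z w) ^+ 2 + complex.Im (Z w) ^+ 2]
  - (complex.Re (cexpect Z) ^+ 2 + complex.Im (cexpect Z) ^+ 2).

(** X ~ U[-a, a] for a >= 0, where U[-0,0] means X = 0 almost surely
    (distribution is the Dirac mass at 0). For a > 0 the law is
    Lebesgue measure restricted to [-a,a] normalised by 2a. *)
Definition centered_uniform (X : T -> R) (a : R) : Prop :=
  measurable_fun setT X /\
  forall A : set R, measurable A ->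
    P (X @^-1` A) =
      if a == 0 then \d_(0:R) A
      else (lebesgue_measure (A `&` [set x : R | (- a <= x <= a)%R]) * ((2 * a)^-1)%:E)%E.

Definition indep_rv (X Y : T -> R) : Prop :=
  forall A B : set R, measurable A -> measurable B ->
    P (X @^-1` A `&` Y @^-1` B) = (P (X @^-1` A) * P (Y @^-1` B))%E.

End Defs.

(* Main.v *)
Require Import Defs.
From HB Require Import structures.
From mathcomp Require Import all_boot all_order all_algebra.
From mathcomp Require Import all_classical all_reals all_analysis.
From mathcomp Require Import complex.
From mathcomp Require Import measurable_realfun ring lra.
Set Implicit Arguments. Unset Strict Implicit. Unset Printing Implicit Defensive.
Import Order.TTheory GRing.Theory Num.Theory.
Import numFieldTopology.Exports numFieldNormedType.Exports.
Local Open Scope ring_scope.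
Local Open Scope classical_set_scope.
Local Open Scope complex_scope.

Section EE.
Context (R : realType) d (T : measurableType d) (P : probability T R).

Definition EE (f : T -> R) : R := fine (\int[P]_w (f w)%:E)%E.

Lemma PsetT : (P : {measure set T -> \bar R}) [set: T] = 1%E.
Proof. exact: probability_setT. Qed.

Definition bmf (f : T -> R) :=
  measurable_fun setT f /\ exists M : R, forall w, `|f w| <= M.

Lemma bmf_int f : bmf f -> P.-integrable setT (EFin \o f).
Proof.
move=> [mf [M hM]]; apply: measurable_bounded_integrable => //.
  idtac.
  exact: (le_lt_trans (probability_le1 P measurableT) (ltry 1)).
exists M; split; first exact: num_real.
move=> x Mx y _; apply: le_trans (hM y) _; exact: ltW.
Qed.

Lemma bmf_fin f : bmf f -> (\int[P]_w (f w)%:E)%E \is a fin_num.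
Proof. by move=> /bmf_int/integrable_fin_num; apply. Qed.

Lemma EE_D f g : bmf f -> bmf g -> EE (fun w => f w + g w) = EE f + EE g.
Proof.
move=> bf bg; rewrite /EE.
under eq_integral do rewrite EFinD.
rewrite integralD//; try exact: bmf_int.
by rewrite fineD //; apply: bmf_fin.
Qed.

Lemma EE_Z (k : R) (f : T -> R) : bmf f -> EE (fun w => k * f w) = k * EE f.
Proof.
move=> bf; rewrite /EE.
under eq_integral do rewrite EFinM.
rewrite integralZl//; last exact: bmf_int.
by rewrite fineM //; apply: bmf_fin.
Qed.

Lemma EE_cst k : EE (fun _ => k) = k.
Proof.
by rewrite /EE integral_cst// PsetT mule1.
Qed.

Lemma bmf_D f g : bmf f -> bmf g -> bmf (fun w => f w + g w).
Proof.
move=> [mf [M hM]] [mg [N hN]]; split; first exact: measurable_funD.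
exists (M + N) => w; apply: le_trans (ler_normD _ _) _; exact: lerD.
Qed.

Lemma bmf_M f g : bmf f -> bmf g -> bmf (fun w => f w * g w).
Proof.
move=> [mf [M hM]] [mg [N hN]]; split; first exact: measurable_funM.
exists (M * N) => w; rewrite normrM; apply: ler_pM => //.
Qed.

Lemma bmf_cst k : bmf (fun _ => k).
Proof. by split => //; exists `|k|. Qed.

Lemma bmf_N f : bmf f -> bmf (fun w => - f w).
Proof.
move=> [mf [M hM]]; split; first exact: measurable_funN.
by exists M => w; rewrite normrN.
Qed.

Lemma EE_N f : bmf f -> EE (fun w => - f w) = - EE f.
Proof.
move=> bf; rewrite -mulN1r -(EE_Z (-1) bf); congr EE.
by apply/funext => w; rewrite mulN1r.
Qed.

Lemma EE_B f g : bmf f -> bmf g -> EE (fun w => f w - g w) = EE f - EE g.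
Proof.
by move=> bf bg; rewrite EE_D ?EE_N //; exact: bmf_N.
Qed.

Lemma EE_sum (I : eqType) (s : seq I) (F : I -> T -> R) :
  (forall i, bmf (F i)) -> EE (fun w => \sum_(i <- s) F i w) = \sum_(i <- s) EE (F i).
Proof.
move=> bF; elim: s => [|i s ih].
  by under eq_fun do rewrite big_nil; rewrite big_nil EE_cst.
rewrite big_cons -ih -EE_D //.
  by apply: congr1; apply/funext => w; rewrite big_cons.
elim: s {ih} => [|j s ih]; first by under eq_fun do rewrite big_nil; exact: bmf_cst.
under eq_fun do rewrite big_cons; exact: bmf_D.
Qed.

End EE.

Section Indep.
Context (R : realType) d (T : measurableType d) (P : probability T R).
Local Open Scope ereal_scope.

Lemma indep_prod_ge0 (X Y : T -> R) : measurable_fun setT X -> measurable_fun setT Y ->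
  indep_rv P X Y ->
  forall g h : R -> R, measurable_fun setT g -> measurable_fun setT h ->
  (forall x, (0 <= g x)%R) -> (forall x, (0 <= h x)%R) ->
  \int[P]_w ((g (X w) * h (Y w))%:E) =
  \int[P]_w ((g (X w))%:E) * \int[P]_w ((h (Y w))%:E).
Proof.
move=> mX mY ind g h mg mh g0 h0.
pose Xm : {mfun T >-> R} := HB.pack X (isMeasurableFun.Build _ _ _ _ _ mX).
pose Ym : {mfun T >-> R} := HB.pack Y (isMeasurableFun.Build _ _ _ _ _ mY).
have mW : measurable_fun setT (fun w => (X w, Y w)) by exact: measurable_fun_pair.
pose Wm : {mfun T >-> (R * R)%type} := HB.pack (fun w => (X w, Y w)) (isMeasurableFun.Build _ _ _ _ _ mW).
pose mu1 := distribution P Xm.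
pose mu2 := distribution P Ym.
pose F := fun z : R * R => (g z.1 * h z.2)%:E.
have mF : measurable_fun setT F.
  apply/measurable_EFinP; apply: measurable_funM.
    exact: measurableT_comp mg measurable_fst.
  exact: measurableT_comp mh measurable_snd.
have F0 : forall z, 0 <= F z by move=> z; rewrite lee_fin mulr_ge0.
have -> : \int[P]_w ((g (X w) * h (Y w))%:E) = \int[distribution P Wm]_z F z.
  by rewrite ge0_integral_distribution //.
have -> : \int[distribution P Wm]_z F z = \int[mu1 \x mu2]_z F z.
  apply: eq_measure_integral => A mA _ /=.
  apply/esym/product_measure_unique => // A1 B1 mA1 mB1.

rewrite fubini_tonelli1 //.
rewrite /fubini_F /F.
have inner : forall x, \int[mu2]_y (g (x, y).1 * h (x, y).2)%:E = (g x)%:E * \int[mu2]_y (h y)%:E.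
  move=> x /=; under eq_integral do rewrite EFinM.
  rewrite ge0_integralZl //.
  - exact/measurable_EFinP.
  - by move=> y _; rewrite lee_fin.
  - by rewrite lee_fin.
under eq_integral do rewrite inner.
rewrite ge0_integralZr //; first rewrite /mu1 /mu2 !ge0_integral_distribution //.
all: try (by move=> y; rewrite lee_fin).
all: try (by move=> y _; rewrite lee_fin).
all: try exact/measurable_EFinP.
by apply: integral_ge0 => y _; rewrite lee_fin.
Qed.
End Indep.

Section Indep2.
Context (R : realType) d (T : measurableType d) (P : probability T R).

Lemma indep_EE (X Y : T -> R) : measurable_fun setT X -> measurable_fun setT Y ->
  indep_rv P X Y ->
  forall g h : R -> R, measurable_fun setT g -> measurable_fun setT h ->
  forall M N : R, (forall x, `|g x| <= M) -> (forall x, `|h x| <= N) ->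
  EE P (fun w => g (X w) * h (Y w)) = EE P (fun w => g (X w)) * EE P (fun w => h (Y w)).
Proof.
move=> mX mY ind g h mg mh M N gM hN.
have M0 : 0 <= M by apply: le_trans (gM 0).
have N0 : 0 <= N by apply: le_trans (hN 0).
have bg : bmf (fun w => g (X w)).
  by split; [exact: measurableT_comp mg mX | exists M].
have bh : bmf (fun w => h (Y w)).
  by split; [exact: measurableT_comp mh mY | exists N].
have bgh := bmf_M bg bh.
have key := indep_prod_ge0 mX mY ind (g := fun x => g x + M) (h := fun x => h x + N).
have mg' : measurable_fun setT (fun x => g x + M) by apply: measurable_funD.
have mh' : measurable_fun setT (fun x => h x + N) by apply: measurable_funD.
have g0 : forall x, 0 <= g x + M.
  by move=> x; have := gM x; rewrite ler_norml => /andP[h1 _]; lra.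
have h0 : forall x, 0 <= h x + N.
  by move=> x; have := hN x; rewrite ler_norml => /andP[h1 _]; lra.
have := congr1 fine (key mg' mh' g0 h0).
rewrite fineM; last 2 first.
- apply: (@bmf_fin _ _ _ P (fun w => g (X w) + M)); exact: (bmf_D bg (@bmf_cst _ _ T M)).
- apply: (@bmf_fin _ _ _ P (fun w => h (Y w) + N)); exact: (bmf_D bh (@bmf_cst _ _ T N)).
rewrite -/(EE P _) -/(EE P _) -/(EE P _).
have bM := @bmf_cst _ _ T M.
have bN := @bmf_cst _ _ T N.
rewrite (EE_D P bg bM) (EE_D P bh bN) !EE_cst.
have -> : (fun w => (g (X w) + M) * (h (Y w) + N)) =
  (fun w => (g (X w) * h (Y w) + N * g (X w)) + (M * h (Y w) + M * N)).
  by apply/funext => w; ring.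
have bNg := bmf_M bN bg.
have bMh := bmf_M bM bh.
rewrite (EE_D P (bmf_D bgh bNg) (bmf_D bMh (@bmf_cst _ _ T (M * N)))).
rewrite (EE_D P bgh bNg) (EE_D P bMh (@bmf_cst _ _ T (M * N))).
rewrite (EE_Z P N bg) (EE_Z P M bh) EE_cst => E.
have : EE P (fun w => g (X w) * h (Y w)) = EE P (fun w => g (X w)) * EE P (fun w => h (Y w)) + 0.
  rewrite -(subrr (M * N)). lra.
by rewrite addr0.
Qed.
End Indep2.
Section Calc.
Context (R : realType).

Lemma der_lin (a x : R) : is_derive x 1 (fun y : R => a * y) a.
Proof.
have := @is_deriveZ R R R id a x 1 1 (is_derive_id _ _).
by rewrite /GRing.scale /= mulr1.
Qed.

Lemma der_sin (a x : R) : is_derive x 1 (fun y : R => sin (a * y)) (cos (a * x) * a).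
Proof. exact: (is_derive1_comp (is_derive_sin (a * x)) (der_lin a x)). Qed.

Lemma der_cos (a x : R) : is_derive x 1 (fun y : R => cos (a * y)) (- sin (a * x) * a).
Proof. exact: (is_derive1_comp (is_derive_cos (a * x)) (der_lin a x)). Qed.

Lemma der_sinF (a x : R) : a != 0 ->
  is_derive x 1 (fun y : R => a^-1 * sin (a * y) + y) (cos (a * x) + 1).
Proof.
move=> a0.
have h2 := @is_deriveZ R R R _ (a^-1) x 1 _ (der_sin a x).
have h3 := @is_deriveD R R R _ _ x 1 _ _ h2 (is_derive_id x 1).
rewrite /GRing.scale /= in h3.
by rewrite mulrCA mulVf // mulr1 in h3.
Qed.

Lemma der_cosF (a x : R) : a != 0 ->
  is_derive x 1 (fun y : R => - (a^-1 * cos (a * y)) + y) (sin (a * x) + 1).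
Proof.
move=> a0.
have h2 := @is_deriveZ R R R _ (a^-1) x 1 _ (der_cos a x).
have h2' := @is_deriveN R R R _ x 1 _ h2.
have h3 := @is_deriveD R R R _ _ x 1 _ _ h2' (is_derive_id x 1).
rewrite /GRing.scale /= in h3.
by move: h3; rewrite mulrCA mulVf // mulr1 opprK.
Qed.

Lemma der_cos1 (a x : R) : is_derive x 1 (fun y : R => cos (a * y) + 1) (- sin (a * x) * a + 0).
Proof. exact: (@is_deriveD R R R _ _ x 1 _ _ (der_cos a x) (@is_derive_cst R R R (1:R) x 1)). Qed.

Lemma der_sin1 (a x : R) : is_derive x 1 (fun y : R => sin (a * y) + 1) (cos (a * x) * a + 0).
Proof. exact: (@is_deriveD R R R _ _ x 1 _ _ (der_sin a x) (@is_derive_cst R R R (1:R) x 1)). Qed.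

Lemma cont_of_der (F f : R -> R) : (forall x : R, is_derive x (1:R) F (f x)) -> continuous F.
Proof.
move=> dF x; apply: differentiable_continuous; apply/derivable1_diffP.
by have [] := dF x.
Qed.

Lemma FTC_app (f F : R -> R) (b : R) : 0 < b -> continuous f ->
  (forall x : R, is_derive x (1:R) F (f x)) ->
  (\int[lebesgue_measure]_(x in `[(- b)%R, b]) (f x)%:E = (F b - F (- b))%:E)%E.
Proof.
move=> b0 cf dF; rewrite EFinB.
apply: continuous_FTC2.
- by rewrite gtrN.
- exact: continuous_subspaceT.
- have cF := cont_of_der dF.
  split.
  + by move=> x _; have [] := dF x.
  + by apply: cvg_at_right_filter; apply: cF.
  + by apply: cvg_at_left_filter; apply: cF.
- by move=> x _; rewrite derive1E; exact: derive_val.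
Qed.

Lemma int_cos1 (a b : R) : 0 < b -> a != 0 ->
  (\int[lebesgue_measure]_(x in `[(- b)%R, b]) (cos (a * x) + 1)%:E =
   (2 * (a^-1 * sin (a * b)) + 2 * b)%:E)%E.
Proof.
move=> b0 a0.
rewrite (FTC_app b0 (cont_of_der (fun x => @der_cos1 a x)) (fun x => @der_sinF a x a0)).
by rewrite mulrN sinN; congr EFin; ring.
Qed.

Lemma int_sin1 (a b : R) : 0 < b -> a != 0 ->
  (\int[lebesgue_measure]_(x in `[(- b)%R, b]) (sin (a * x) + 1)%:E = (2 * b)%:E)%E.
Proof.
move=> b0 a0.
rewrite (FTC_app b0 (cont_of_der (fun x => @der_sin1 a x)) (fun x => @der_cosF a x a0)).
by rewrite mulrN cosN; congr EFin; ring.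
Qed.
End Calc.

Section Marg.
Context (R : realType) d (T : measurableType d) (P : probability T R).
Local Open Scope ereal_scope.

Lemma marg (X : T -> R) (al : R) : (0 <= al)%R -> centered_uniform P X al ->
  forall f : R -> R, measurable_fun setT f -> (forall x, 0 <= f x)%R ->
  \int[P]_w (f (X w))%:E = if al == 0%R then (f 0%R)%:E
     else ((2 * al)^-1)%:E * \int[lebesgue_measure]_(x in `[(- al)%R, al]) (f x)%:E.
Proof.
move=> al0 [mX hX] f mf f0.
pose Xm : {mfun T >-> measurableTypeR R} := HB.pack (X : T -> measurableTypeR R) (@isMeasurableFun.Build _ _ T (measurableTypeR R) X mX).
have -> : \int[P]_w (f (X w))%:E = \int[distribution P Xm]_x (f x)%:E.
  rewrite ge0_integral_distribution //; first exact/measurable_EFinP.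
have [al0e|aln0] := eqVneq al 0%R.
  subst al.
  rewrite (eq_measure_integral (@dirac _ (measurableTypeR R) (0%R : R) R)); last first.
    by move=> A mA _; have := hX A mA; rewrite eqxx; exact.
  rewrite integral_dirac //; last exact/measurable_EFinP.
  by rewrite diracT mul1e.
have alp : (0 < al)%R by rewrite lt_neqAle eq_sym aln0.
have ab : (- al < al)%R by rewrite gtrN.
rewrite [LHS](eq_measure_integral (uniform_prob ab)); last first.
  move=> A mA _; have := hX A mA; rewrite (negbTE aln0) => hA.
  apply: eq_trans hA _.
  apply: (@eq_trans _ _ (\int[lebesgue_measure]_(x in A `&` `[(- al)%R, al]) (uniform_pdf (- al) al x)%:E)); last exact: (esym (integral_uniform_pdf _ _ A)).
  rewrite (eq_integral (fun=> ((al - - al)^-1)%:E)); last first.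
    by move=> x; rewrite inE /= in_itv /= => -[_ hx]; rewrite /uniform_pdf hx.
  rewrite integral_cst //=; last by apply: measurableI => //; exact: measurable_itv.
  rewrite muleC opprK; congr (_ * _); last by congr EFin; congr GRing.inv; ring.
rewrite integral_uniform //; last first.
  by apply: measurableT_comp => //; exact: mf.
by rewrite opprK; congr (_ * _); congr EFin; congr GRing.inv; ring.
Qed.
End Marg.

Section Marg2.
Context (R : realType) d (T : measurableType d) (P : probability T R).

Lemma mcos (a : R) : measurable_fun setT (fun x : R => cos (a * x)).
Proof. apply: continuous_measurable_fun; exact: cont_of_der (fun x => der_cos a x). Qed.

Lemma msin (a : R) : measurable_fun setT (fun x : R => sin (a * x)).
Proof. apply: continuous_measurable_fun; exact: cont_of_der (fun x => der_sin a x). Qed.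

Lemma ncos (x : R) : `|cos x| <= 1.
Proof. by rewrite ler_norml cos_geN1 cos_le1. Qed.

Lemma nsin (x : R) : `|sin x| <= 1.
Proof. by rewrite ler_norml sin_geN1 sin_le1. Qed.

Lemma bmf_cosX (X : T -> R) (a : R) : measurable_fun setT X -> bmf (fun w => cos (a * X w)).
Proof.
move=> mX; split; first exact: measurableT_comp (mcos a) mX.
by exists 1 => w; exact: ncos.
Qed.

Lemma bmf_sinX (X : T -> R) (a : R) : measurable_fun setT X -> bmf (fun w => sin (a * X w)).
Proof.
move=> mX; split; first exact: measurableT_comp (msin a) mX.
by exists 1 => w; exact: nsin.
Qed.

Lemma EE_cosX (X : T -> R) (al : R) : 0 <= al -> centered_uniform P X al ->
  forall a, EE P (fun w => cos (a * X w)) = sinc (a * al).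
Proof.
move=> al0 cu a; have mX := cu.1.
have [->|a0] := eqVneq a 0.
  under eq_fun do rewrite mul0r cos0.
  by rewrite EE_cst /sinc mul0r eqxx.
have E1 : EE P (fun w => cos (a * X w) + 1) = EE P (fun w => cos (a * X w)) + 1.
  by rewrite (EE_D P (bmf_cosX a mX) (@bmf_cst _ _ T 1)) EE_cst.
have := @marg R d T P X al al0 cu (fun x => cos (a * x) + 1).
move=> /(_ (measurable_funD (mcos a) (measurable_cst _))).
have c0 : forall x : R, 0 <= cos (a * x) + 1.
  by move=> x; have := cos_geN1 (a * x); lra.
move=> /(_ c0) h.
have := congr1 fine h; rewrite -/(EE P _) E1.
have [al0e|aln0] := eqVneq al 0.
  subst al; have e : a * 0 = 0 by rewrite mulr0.
  rewrite e cos0 /sinc eqxx /=; lra.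
have alp : 0 < al by rewrite lt_neqAle eq_sym aln0.
rewrite (int_cos1 alp a0) /= /sinc mulf_eq0 (negbTE a0) (negbTE aln0) /=.
move=> E; have : EE P (fun w => cos (a * X w)) = (2 * al)^-1 * (2 * (a^-1 * sin (a * al)) + 2 * al) - 1 by lra.
move=> ->; field.
by rewrite a0 aln0.
Qed.

Lemma EE_sinX (X : T -> R) (al : R) : 0 <= al -> centered_uniform P X al ->
  forall a, EE P (fun w => sin (a * X w)) = 0.
Proof.
move=> al0 cu a; have mX := cu.1.
have [->|a0] := eqVneq a 0.
  under eq_fun do rewrite mul0r sin0.
  by rewrite EE_cst.
have E1 : EE P (fun w => sin (a * X w) + 1) = EE P (fun w => sin (a * X w)) + 1.
  by rewrite (EE_D P (bmf_sinX a mX) (@bmf_cst _ _ T 1)) EE_cst.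
have := @marg R d T P X al al0 cu (fun x => sin (a * x) + 1).
move=> /(_ (measurable_funD (msin a) (measurable_cst _))).
have c0 : forall x : R, 0 <= sin (a * x) + 1.
  by move=> x; have := sin_geN1 (a * x); lra.
move=> /(_ c0) h.
have := congr1 fine h; rewrite -/(EE P _) E1.
have [al0e|aln0] := eqVneq al 0.
  subst al; have e : a * 0 = 0 by rewrite mulr0.
  rewrite e sin0 /=; lra.
have alp : 0 < al by rewrite lt_neqAle eq_sym aln0.
rewrite (int_sin1 alp a0) /= mulVf; first lra.
by rewrite mulf_eq0 negb_or aln0 andbT pnatr_eq0.
Qed.
End Marg2.

Section Comb.
Context (R : realType) d (T : measurableType d) (P : probability T R).
Variables (X Y : T -> R) (ax ay : R).
Hypotheses (ax0 : 0 <= ax) (ay0 : 0 <= ay).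
Hypotheses (cX : centered_uniform P X ax) (cY : centered_uniform P Y ay).
Hypothesis ind : indep_rv P X Y.

Let mX := cX.1.
Let mY := cY.1.

Lemma cosXY_eq a b : (fun w => cos (a * X w + b * Y w)) =
  (fun w => cos (a * X w) * cos (b * Y w) - sin (a * X w) * sin (b * Y w)).
Proof. by apply/funext => w; rewrite cosD. Qed.

Lemma sinXY_eq a b : (fun w => sin (a * X w + b * Y w)) =
  (fun w => sin (a * X w) * cos (b * Y w) + cos (a * X w) * sin (b * Y w)).
Proof. by apply/funext => w; rewrite sinD. Qed.

Lemma bmf_cosXY a b : bmf (fun w => cos (a * X w + b * Y w)).
Proof.
rewrite cosXY_eq; apply: bmf_D; first exact: bmf_M (bmf_cosX a mX) (bmf_cosX b mY).
exact: bmf_N (bmf_M (bmf_sinX a mX) (bmf_sinX b mY)).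
Qed.

Lemma bmf_sinXY a b : bmf (fun w => sin (a * X w + b * Y w)).
Proof.
rewrite sinXY_eq; apply: bmf_D; first exact: bmf_M (bmf_sinX a mX) (bmf_cosX b mY).
exact: bmf_M (bmf_cosX a mX) (bmf_sinX b mY).
Qed.

Let ind2 (g h : R -> R) (mg : measurable_fun setT g) (mh : measurable_fun setT h)
  (gb : forall x, `|g x| <= 1) (hb : forall x, `|h x| <= 1) :=
  @indep_EE R d T P X Y mX mY ind g h mg mh 1 1 gb hb.

Lemma EE_cosXY a b : EE P (fun w => cos (a * X w + b * Y w)) = sinc (a * ax) * sinc (b * ay).
Proof.
rewrite cosXY_eq (EE_B P (bmf_M (bmf_cosX a mX) (bmf_cosX b mY)) (bmf_M (bmf_sinX a mX) (bmf_sinX b mY))).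
rewrite (ind2 (mcos a) (mcos b) (fun x => ncos _) (fun x => ncos _)).
rewrite (ind2 (msin a) (msin b) (fun x => nsin _) (fun x => nsin _)).
rewrite (EE_cosX ax0 cX) (EE_cosX ay0 cY) (EE_sinX ax0 cX) (EE_sinX ay0 cY).
by rewrite mul0r subr0.
Qed.

Lemma EE_sinXY a b : EE P (fun w => sin (a * X w + b * Y w)) = 0.
Proof.
rewrite sinXY_eq (EE_D P (bmf_M (bmf_sinX a mX) (bmf_cosX b mY)) (bmf_M (bmf_cosX a mX) (bmf_sinX b mY))).
rewrite (ind2 (msin a) (mcos b) (fun x => nsin _) (fun x => ncos _)).
rewrite (ind2 (mcos a) (msin b) (fun x => ncos _) (fun x => nsin _)).
rewrite (EE_sinX ax0 cX) (EE_sinX ay0 cY).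
by rewrite mul0r mulr0 addr0.
Qed.
End Comb.
Section C.
Context (R : realType).

Lemma Re_sum (I : Type) (s : seq I) (F : I -> R[i]) :
  complex.Re (\sum_(i <- s) F i) = \sum_(i <- s) complex.Re (F i).
Proof.
elim: s => [|i s ih]; first by rewrite !big_nil.
rewrite !big_cons -ih; by case: (F i) => a b; case: (\sum_(j <- s) F j).
Qed.

Lemma Im_sum (I : Type) (s : seq I) (F : I -> R[i]) :
  complex.Im (\sum_(i <- s) F i) = \sum_(i <- s) complex.Im (F i).
Proof.
elim: s => [|i s ih]; first by rewrite !big_nil.
rewrite !big_cons -ih; by case: (F i) => a b; case: (\sum_(j <- s) F j).
Qed.

Lemma Re_cexp (u v : R) : complex.Re (conjc (expj u) * expj v) = cos (u - v).
Proof. rewrite /expj /= cosB. ring. Qed.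

Lemma Im_cexp (u v : R) : complex.Im (conjc (expj u) * expj v) = - sin (u - v).
Proof. rewrite /expj /= sinB. ring. Qed.

Lemma realC_eq (x : R) : x +i* 0 = x%:C.
Proof. by []. Qed.
End C.

Section Main.
Context (R : realType).

Lemma EEE d (T : measurableType d) (P : probability T R) (f : T -> R) :
  fine ('E_P[f])%E = EE P f.
Proof. by rewrite unlock. Qed.

Lemma bmf_sum d (T : measurableType d) (I : Type) (s : seq I) (F : I -> T -> R) :
  (forall i, bmf (F i)) -> bmf (fun w => \sum_(i <- s) F i w).
Proof.
move=> bF; elim: s => [|j s ih]; first by under eq_fun do rewrite big_nil; exact: bmf_cst.
under eq_fun do rewrite big_cons; exact: bmf_D.
Qed.

Lemma EE_sum' d (T : measurableType d) (P : probability T R) (I : finType) (F : I -> T -> R) :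
  (forall i, bmf (F i)) -> EE P (fun w => \sum_(i : I) F i w) = \sum_(i : I) EE P (F i).
Proof.
move=> bF; rewrite -(EE_sum P (index_enum I) bF).
by [].
Qed.

Lemma sum_pair2 (I J : finType) (F : I -> R) (G : J -> R) :
  \sum_(m : I * J) F m.1 * G m.2 = (\sum_i F i) * (\sum_j G j).
Proof. by rewrite -(pair_bigA _ (fun i j => F i * G j)) big_distrlr. Qed.

Lemma sum_pair4 (I J : finType) (F : I -> I -> R) (G : J -> J -> R) :
  \sum_(m : I * J) \sum_(m' : I * J) F m.1 m'.1 * G m.2 m'.2 =
  (\sum_i \sum_i' F i i') * (\sum_j \sum_j' G j j').
Proof.
have -> : \sum_(m : I * J) \sum_(m' : I * J) F m.1 m'.1 * G m.2 m'.2 =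
   \sum_(m : I * J) (\sum_i' F m.1 i') * (\sum_j' G m.2 j').
  by apply: eq_bigr => m _; rewrite (sum_pair2 (F m.1) (G m.2)).
by rewrite (sum_pair2 (fun i => \sum_i' F i i') (fun j => \sum_j' G j j')).
Qed.
End Main.

Unset Implicit Arguments. Local Close Scope classical_set_scope.

Theorem lemma1 (R : realType) (d : measure_display) (T : measurableType d)
  (P : probability T R) (Mx My : nat) (dx dy lam alx aly : R)
  (thx1 thy1 thx2 thy2 : T -> R) :
  0 < dx -> 0 < dy -> 0 < lam ->
  0 <= alx <= 1 -> 0 <= aly <= 1 ->
  measurable_fun setT thx1 -> measurable_fun setT thy1 ->
  measurable_fun setT thx2 -> measurable_fun setT thy2 ->
  centered_uniform P (fun w => sin (thx1 w) - sin (thx2 w)) alx ->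
  centered_uniform P (fun w => sin (thy1 w) - sin (thy2 w)) aly ->
  indep_rv P (fun w => sin (thx1 w) - sin (thx2 w))
             (fun w => sin (thy1 w) - sin (thy2 w)) ->
  let Z := fun w => herm_inner (steer Mx My dx dy lam (thx1 w, thy1 w))
                               (steer Mx My dx dy lam (thx2 w, thy2 w)) in
  cexpect P Z = (upa_mu (alx * dx / lam) Mx * upa_mu (aly * dy / lam) My)%:C /\
  cvariance P Z = upa_eta (alx * dx / lam) Mx * upa_eta (aly * dy / lam) My
                  - (upa_mu (alx * dx / lam) Mx * upa_mu (aly * dy / lam) My) ^+ 2.
Proof.
move=> dx0 dy0 lam0 /andP[ax0 _] /andP[ay0 _] _ _ _ _ cX cY ind Z.
pose X := fun w => sin (thx1 w) - sin (thx2 w).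
pose Y := fun w => sin (thy1 w) - sin (thy2 w).
have cX' : centered_uniform P X alx := cX.
have cY' : centered_uniform P Y aly := cY.
have ind' : indep_rv P X Y := ind.
pose a := fun i : 'I_Mx => 2 * pi / lam * (dx * (i : nat)%:R).
pose b := fun j : 'I_My => 2 * pi / lam * (dy * (j : nat)%:R).
pose th := fun (m : 'I_Mx * 'I_My) w => a m.1 * X w + b m.2 * Y w.
have ReZ : forall w, complex.Re (Z w) = \sum_(m : 'I_Mx * 'I_My) cos (th m w).
  move=> w; rewrite /Z /herm_inner Re_sum; apply: eq_bigr => m _.
  rewrite !ffunE Re_cexp /th /a /b /X /Y /=; congr cos; ring.
have ImZ : forall w, complex.Im (Z w) = - \sum_(m : 'I_Mx * 'I_My) sin (th m w).
  move=> w; rewrite /Z /herm_inner Im_sum -sumrN; apply: eq_bigr => m _.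
  rewrite !ffunE Im_cexp /th /a /b /X /Y /=; congr (- sin _); ring.
have bc : forall m, bmf (fun w => cos (th m w)) := fun m => bmf_cosXY cX' cY' (a m.1) (b m.2).
have bs : forall m, bmf (fun w => sin (th m w)) := fun m => bmf_sinXY cX' cY' (a m.1) (b m.2).
have Ecos : forall m, EE P (fun w => cos (th m w)) = sinc (a m.1 * alx) * sinc (b m.2 * aly).
  by move=> m; exact: (EE_cosXY ax0 ay0 cX' cY' ind').
have Esin : forall m, EE P (fun w => sin (th m w)) = 0.
  by move=> m; exact: (EE_sinXY ax0 ay0 cX' cY' ind').
have mean_re : EE P (fun w => complex.Re (Z w)) =
    upa_mu (alx * dx / lam) Mx * upa_mu (aly * dy / lam) My.
  have -> : (fun w => complex.Re (Z w)) = (fun w => \sum_(m : 'I_Mx * 'I_My) cos (th m w)).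
    by apply/funext => w; exact: ReZ.
  rewrite EE_sum' //; under eq_bigr do rewrite Ecos.
  rewrite /upa_mu -(sum_pair2 (fun i : 'I_Mx => sinc (2 * pi * (i : nat)%:R * (alx * dx / lam)))
                          (fun j : 'I_My => sinc (2 * pi * (j : nat)%:R * (aly * dy / lam)))).
  apply: eq_bigr => m _; congr (sinc _ * sinc _); rewrite /a /b; ring.
have mean_im : EE P (fun w => complex.Im (Z w)) = 0.
  have -> : (fun w => complex.Im (Z w)) = (fun w => - \sum_(m : 'I_Mx * 'I_My) sin (th m w)).
    by apply/funext => w; exact: ImZ.
  rewrite (EE_N P (bmf_sum (index_enum _) bs)) EE_sum' //.
  by rewrite big1 ?oppr0 // => m _; exact: Esin.
split.
  by rewrite /cexpect !EEE mean_re mean_im.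
rewrite /cvariance /cexpect !EEE mean_re mean_im /=.
have sq : forall w, complex.Re (Z w) ^+ 2 + complex.Im (Z w) ^+ 2 =
    \sum_(m : 'I_Mx * 'I_My) \sum_(m' : 'I_Mx * 'I_My)
       cos ((a m.1 - a m'.1) * X w + (b m.2 - b m'.2) * Y w).
  move=> w; rewrite ReZ ImZ sqrrN !expr2 !big_distrlr -big_split /=.
  apply: eq_bigr => m _; rewrite -big_split; apply: eq_bigr => m' _ /=.
  rewrite -cosB; congr cos; rewrite /th; ring.
have -> : (fun w => complex.Re (Z w) ^+ 2 + complex.Im (Z w) ^+ 2) =
    (fun w => \sum_(m : 'I_Mx * 'I_My) \sum_(m' : 'I_Mx * 'I_My)
       cos ((a m.1 - a m'.1) * X w + (b m.2 - b m'.2) * Y w)).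
  by apply/funext => w; exact: sq.
rewrite EE_sum'; last first.
  move=> m; apply: (bmf_sum (index_enum _)) => m'.
  exact: (bmf_cosXY cX' cY').
have inner : forall m : 'I_Mx * 'I_My,
    EE P (fun w => \sum_(m' : 'I_Mx * 'I_My) cos ((a m.1 - a m'.1) * X w + (b m.2 - b m'.2) * Y w)) =
    \sum_(m' : 'I_Mx * 'I_My) sinc ((a m.1 - a m'.1) * alx) * sinc ((b m.2 - b m'.2) * aly).
  move=> m; rewrite EE_sum'; last by move=> m'; exact: (bmf_cosXY cX' cY').
  by apply: eq_bigr => m' _; exact: (EE_cosXY ax0 ay0 cX' cY' ind').
under eq_bigr do rewrite inner.
rewrite /upa_eta -(sum_pair4
   (fun i i' : 'I_Mx => sinc (2 * pi * (alx * dx / lam) * ((i : nat)%:R - (i' : nat)%:R)))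
   (fun j j' : 'I_My => sinc (2 * pi * (aly * dy / lam) * ((j : nat)%:R - (j' : nat)%:R)))).
have -> : \sum_(m : 'I_Mx * 'I_My) \sum_(m' : 'I_Mx * 'I_My)
     sinc ((a m.1 - a m'.1) * alx) * sinc ((b m.2 - b m'.2) * aly) =
   \sum_(m : 'I_Mx * 'I_My) \sum_(m' : 'I_Mx * 'I_My)
     sinc (2 * pi * (alx * dx / lam) * ((m.1 : nat)%:R - (m'.1 : nat)%:R)) *
     sinc (2 * pi * (aly * dy / lam) * ((m.2 : nat)%:R - (m'.2 : nat)%:R)).
  apply: eq_bigr => m _; apply: eq_bigr => m' _.
  by congr (sinc _ * sinc _); rewrite /a /b; ring.
ring.
Qed.
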